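(* Let $Z = (G, c)$ and $Z' = (G', c')$ be zonotopes in $\mathbb{R}^n$ with $G = [g_1, \dots, g_N]$ and $G' = [\alpha_1 g_1, \dots, \alpha_N g_N]$ for some $\alpha_1, \dots, \alpha_N \in [0,1]$ (i.e. $Z'$ is aligned with $Z$). Then $$Z \ominus Z' = \big([(1-\alpha_1) g_1, (1-\alpha_2) g_2, \dots, (1-\alpha_N) g_N], \, c - c'\big).$$
   Context: A zonotope with generator-representation $(G, c)$, where $G = [g_1, \dots, g_N] \in \mathbb{R}^{n \times N}$ and $c \in \mathbb{R}^n$, is the set $\{c + \sum_{i=1}^N \theta_i g_i \mid \theta_i \in [-1,1], i = 1, \dots, N\}$; it is denoted $(G, c)$. The Minkowski difference of sets $X, Y \subseteq \mathbb{R}^n$ is $X \ominus Y = \{z \in \mathbb{R}^n \mid z + Y \subseteq X\}$. *)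

(* Defs.v *)
(* vectors in R^n are column vectors 'cV[R]_n,
   generator matrices are 'M[R]_(n, N) (column j = generator g_j). *)
From mathcomp Require Import all_boot all_order all_algebra.
Set Implicit Arguments. Unset Strict Implicit. Unset Printing Implicit Defensive.
Import Order.TTheory GRing.Theory Num.Theory.
Local Open Scope ring_scope.

Definition zonotope (R : realFieldType) (n N : nat)
    (G : 'M[R]_(n, N)) (c : 'cV[R]_n) : 'cV[R]_n -> Prop :=
  fun z => exists theta : 'cV[R]_N,
      (forall i : 'I_N, -1 <= theta i 0 <= 1) /\ z = c + G *m theta.

Definition minkowski_diff (R : realFieldType) (n : nat)
    (X Y : 'cV[R]_n -> Prop) : 'cV[R]_n -> Prop :=
  fun z => forall y, Y y -> X (z + y).

Definition scale_gens (R : realFieldType) (n N : nat)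
    (a : 'I_N -> R) (G : 'M[R]_(n, N)) : 'M[R]_(n, N) :=
  \matrix_(i < n, j < N) (a j * G i j).

(* Main.v *)
Require Import Defs.
From mathcomp Require Import all_boot all_order all_algebra.
From mathcomp Require Import ring lra zify.
Import Order.TTheory GRing.Theory Num.Theory.
Local Open Scope ring_scope.

Definition av (R : realFieldType) (N : nat) (a : 'I_N -> R) (p : 'cV[R]_N) : 'cV[R]_N :=
  \col_i (a i * p i 0).

Arguments av {R N}.

Lemma scaleE (R : realFieldType) (n N : nat) (a : 'I_N -> R) (G : 'M[R]_(n, N)) (t : 'cV[R]_N) :
  scale_gens a G *m t = G *m av a t.
Proof.
apply/matrixP => i k; rewrite !mxE; apply: eq_bigr => j _; rewrite !mxE (ord1 k).
by rewrite mulrA (mulrC (a j)).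
Qed.

Lemma avDe (R : realFieldType) (N : nat) (a : 'I_N -> R) (p : 'cV[R]_N) (j : 'I_N) (t : R) :
  av a (p + t *: delta_mx j 0) = av a p + (t * a j) *: delta_mx j 0.
Proof.
apply/matrixP => i k; rewrite !mxE (ord1 k) /= andbT.
case: eqP => [->|_] /=; first by ring.
by rewrite !mulr0 !addr0.
Qed.

Lemma lam_ex (R : realFieldType) (a b e : R) : a <= e -> -e <= b -> 0 <= e ->
  exists l, 0 <= l <= 1 /\ -e <= l * a + (1 - l) * b <= e.
Proof.
move=> ha hb he.
case: (lerP (-e) a) => h1.
  by exists 1; split; [rewrite ler01 lexx | rewrite subrr mul0r addr0 mul1r h1 ha].
case: (lerP b e) => h2.
  by exists 0; split; [rewrite lexx ler01 | rewrite subr0 mul0r add0r mul1r h2 hb].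
have hba : 0 < b - a by lra.
exists (b / (b - a)); split.
  apply/andP; split; first by apply: divr_ge0; lra.
  by rewrite ler_pdivrMr // mul1r; lra.
have -> : b / (b - a) * a + (1 - b / (b - a)) * b = 0.
  by field; lra.
lra.
Qed.

Lemma claim (R : realFieldType) (n N : nat) (G : 'M[R]_(n, N)) (alpha : 'I_N -> R)
  (w : 'cV[R]_n) (ha : forall j, 0 <= alpha j <= 1)
  (H0 : forall p : 'cV[R]_N, (forall i, -1 <= p i 0 <= 1) ->
     exists q : 'cV[R]_N, (forall i, -1 <= q i 0 <= 1) /\ w + G *m av alpha p = G *m q)
  (k : nat) :
  forall p : 'cV[R]_N, (forall i, -1 <= p i 0 <= 1) ->
    (forall i : 'I_N, (i < k)%N -> p i 0 = 0) ->
    exists q : 'cV[R]_N,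
      (forall i : 'I_N, - (if (i < k)%N then 1 - alpha i else 1) <= q i 0
                        <= (if (i < k)%N then 1 - alpha i else 1))
      /\ w + G *m av alpha p = G *m q.
Proof.
elim: k => [|k IH] p hp hz.
  by have [q [hq e]] := H0 p hp; exists q; split.
case: (ltnP k N) => hk; last first.
  have [q [hq e]] := IH p hp (fun i hi => hz i (ltnW hi)).
  exists q; split => // i.
  have -> : (i < k.+1)%N = (i < k)%N by have := ltn_ord i; lia.
  exact: hq.
pose j := Ordinal hk.
pose e : 'cV[R]_N := delta_mx j 0.
have hpj : p j 0 = 0 by apply: hz => /=.
have eE : forall i, e i 0 = (i == j)%:R by move=> i; rewrite mxE andbT.
have bnd : forall t : R, -1 <= t <= 1 -> forall i, -1 <= (p + t *: e) i 0 <= 1.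
  move=> t ht i; rewrite !mxE andbT; case: eqP => [->|_].
    by rewrite hpj add0r mulr1.
  by rewrite mulr0 addr0.
have zer : forall t : R, forall i : 'I_N, (i < k)%N -> (p + t *: e) i 0 = 0.
  move=> t i hi; rewrite !mxE andbT; case: eqP => [hij|_].
    by move: hi; rewrite hij /= ltnn.
  by rewrite mulr0 addr0; apply: hz; apply: ltnW.
have [q1 [hq1 e1]] := IH _ (bnd 1 ltac:(lra)) (zer 1).
have [q2 [hq2 e2]] := IH _ (bnd (-1) ltac:(lra)) (zer (-1)).
rewrite avDe mul1r mulmxDr -scalemxAr addrA in e1.
rewrite avDe mulN1r mulmxDr -scalemxAr addrA in e2.
have hj1 := hq1 j; have hj2 := hq2 j.
rewrite /= ltnn in hj1 hj2.
have [haj1 haj2] := andP (ha j).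
have [l [hl hv]] := @lam_ex R (q1 j 0 - alpha j) (q2 j 0 + alpha j)
   (1 - alpha j) ltac:(lra) ltac:(lra) ltac:(lra).
exists (l *: (q1 - alpha j *: e) + (1 - l) *: (q2 + alpha j *: e)); split.
  move=> i; rewrite !mxE !andbT.
  case: (eqVneq i j) => [->|hij].
    by rewrite /= ltnSn !mulr1.
  rewrite /= !mulr0 subr0 addr0.
  have -> : (i < k.+1)%N = (i < k)%N.
    have : nat_of_ord i != k by apply: contra hij => /eqP h; apply/eqP/val_inj.
    lia.
  have := hq1 i; have := hq2 i.
  case: (i < k)%N => h2 h1; nra.
rewrite mulmxDr -!scalemxAr mulmxBr mulmxDr -!scalemxAr -e1 -e2.
set X := w + _; set Y := _ *: (G *m e).
rewrite scaleNr addrK subrK -scalerDl addrC subrK scale1r.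
done.
Qed.

Theorem proposition3 (R : realFieldType) (n N : nat)
    (G : 'M[R]_(n, N)) (c c' : 'cV[R]_n) (alpha : 'I_N -> R) :
  (forall j : 'I_N, 0 <= alpha j <= 1) ->
  forall z : 'cV[R]_n,
    minkowski_diff (zonotope G c) (zonotope (scale_gens alpha G) c') z <->
    zonotope (scale_gens (fun j => 1 - alpha j) G) (c - c') z.
Proof.
move=> ha z; split.
  move=> hm.
  pose w := z - (c - c').
  have H0 : forall p : 'cV[R]_N, (forall i, -1 <= p i 0 <= 1) ->
     exists q : 'cV[R]_N, (forall i, -1 <= q i 0 <= 1) /\ w + G *m av alpha p = G *m q.
    move=> p hp.
    have [q [hq eq]] := hm (c' + scale_gens alpha G *m p) (ex_intro _ p (conj hp erefl)).
    exists q; split => //.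
    rewrite -scaleE /w.
    apply: (addrI c); rewrite -eq; by apply/matrixP => ?? ; rewrite !mxE; ring.
  have [q [hq eq]] := @claim R n N G alpha w ha H0 N 0 (fun i => ltac:(rewrite mxE; lra))
     (fun i _ => ltac:(by rewrite mxE)).
  exists (\col_i (if alpha i == 1 then 0 else q i 0 / (1 - alpha i))); split.
    move=> i; rewrite mxE; case: eqP => [_|hne]; first by lra.
    have := hq i; rewrite ltn_ord => h.
    have [h1 h2] := andP (ha i).
    have hne' : alpha i != 1 by apply/eqP.
    have hpos : 0 < 1 - alpha i by rewrite subr_gt0 lt_neqAle hne' h2.
    by rewrite ler_pdivrMr // ler_pdivlMr // mul1r mulN1r; lra.
  rewrite scaleE.
  have -> : av (fun j => 1 - alpha j)
     (\col_i (if alpha i == 1 then 0 else q i 0 / (1 - alpha i))) = q.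
    apply/matrixP => i k; rewrite !mxE (ord1 k).
    case: eqP => [h1|hne].
      have := hq i; rewrite ltn_ord h1 subrr oppr0 => hh.
      by rewrite mulr0; apply/esym/le_anti; rewrite andbC.
    rewrite mulrC divfK //; rewrite subr_eq0; apply/eqP => hh; apply: hne; by rewrite hh.
  move: eq; rewrite (_ : av alpha 0 = 0); last by apply/matrixP => i k; rewrite !mxE mulr0.
  rewrite mulmx0 addr0 /w => <-; by apply/matrixP => ?? ; rewrite !mxE; ring.
move=> [t [ht ->]] y [p [hp ->]].
exists (\col_i ((1 - alpha i) * t i 0 + alpha i * p i 0)); split.
  move=> i; rewrite mxE; have := ht i; have := hp i; have := ha i; nra.
rewrite !scaleE.
have -> : G *m \col_i ((1 - alpha i) * t i 0 + alpha i * p i 0)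
   = G *m av (fun j => 1 - alpha j) t + G *m av alpha p.
  rewrite -mulmxDr; congr (_ *m _); apply/matrixP => i k; rewrite !mxE //.
by apply/matrixP => ?? ; rewrite !mxE; ring.
Qed.
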